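(* Under the setting below, for all $u,u'\in\Omega_\beta$, $\|S(u)-S(u')\|^2\ge\sigma\|u-u'\|^2$.
   Context: Let $k\ge2$, $L,\beta>0$, $\sigma>1$, $C_1,C_2>1$, and $\Phi_0:(-L-\beta,L+\beta)^k\to\mathbb R$ of class $C^2$ with, for all $x$ in its domain, $(\partial_1\Phi_0(x))^2\ge C_1^{k-1}C_2\sigma^k$ and $(\partial_j\Phi_0(x))^2\le\frac{(C_1-1)(C_2-1)}{k-1}\sigma$ for $2\le j\le k$. Let $\gamma>0$ with $\gamma^{-2}=C_1\sigma$, $\Gamma(x)=(\gamma^{-(j-1)}x_j)_{j=1}^k$, $\Omega_\beta=\Gamma^{-1}((-L-\beta,L+\beta)^k)$, and $S:\Omega_\beta\to\mathbb R^k$, $S(u)=(u_2/\gamma,\dots,u_k/\gamma,\gamma^{k-1}\Phi_0(\Gamma u))$. $\|\cdot\|$ is the Euclidean norm. (In the paper, $\sigma$ is moreover chosen larger than a threshold $S_k(k+2)$; this is not used here.) *)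

(* Defs.v *)
(* Points of R^k are row vectors 'rV[R]_k,
   coordinates are 0-indexed (paper's x_j is x 0 (j-1)). *)
From HB Require Import structures.
From mathcomp Require Import all_boot all_order all_algebra.
From mathcomp Require Import all_classical all_reals all_analysis.
Set Implicit Arguments. Unset Strict Implicit. Unset Printing Implicit Defensive.
Import Order.TTheory GRing.Theory Num.Theory.
Import numFieldNormedType.Exports.
Local Open Scope classical_set_scope.
Local Open Scope ring_scope.

Section Defs.
Variables (R : realType) (k : nat).

Definition sqnorm (v : 'rV[R]_k) : R := \sum_(i < k) (v 0 i) ^+ 2.

Definition partial (j : 'I_k) (f : 'rV[R]_k -> R) (x : 'rV[R]_k) : R :=
  derive f x (delta_mx 0 j).

Definition cube (a : R) : set 'rV[R]_k :=
  [set x | forall j : 'I_k, - a < x 0 j < a].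

Definition C2_on (U : set 'rV[R]_k) (f : 'rV[R]_k -> R) : Prop :=
  forall x, U x ->
    differentiable f x /\
    forall i : 'I_k, differentiable (partial i f) x /\
      forall j : 'I_k, {for x, continuous (partial j (partial i f))}.

Definition Gamma (g : R) (u : 'rV[R]_k) : 'rV[R]_k :=
  \row_(j < k) (g ^- j * u 0 j).

Definition Omega (g L b : R) : set 'rV[R]_k := Gamma g @^-1` cube (L + b).

(* S(u) = (u_2/g, ..., u_k/g, g^{k-1} Phi0(Gamma u)) *)
Definition Smap (g : R) (Phi0 : 'rV[R]_k -> R) (u : 'rV[R]_k) : 'rV[R]_k :=
  \row_(i < k) (if (i.+1 < k)%N then u 0 (insubd i i.+1) / g
                else g ^+ (k - 1) * Phi0 (Gamma g u)).

End Defs.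

(* Main.v *)
Require Import Defs.
From HB Require Import structures.
From mathcomp Require Import all_boot all_order all_algebra.
From mathcomp Require Import all_classical all_reals all_analysis.
From mathcomp Require Import ring lra.
Import Order.TTheory GRing.Theory Num.Theory.
Import numFieldNormedType.Exports.
Local Open Scope classical_set_scope.
Local Open Scope ring_scope.

Lemma mvt_line (R : realType) k (U : set 'rV[R]_k) (f : 'rV[R]_k -> R) (p q : 'rV[R]_k) :
  (forall t : R, 0 <= t <= 1 -> U (q + t *: (p - q))) ->
  (forall x, U x -> differentiable f x) ->
  exists2 xi, U xi & f p - f q = \sum_(j < k) (p - q) 0 j * partial j f xi.
Proof.
move=> HU Hd.
set d := p - q. set h := fun t : R => f (q + t *: d).
have Hh : forall t : R, U (q + t *: d) -> is_derive t 1 h ('D_d f (q + t *: d)).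
  move=> t Ut.
  have key : (fun s : R => s^-1 *: ((h \o shift t) (s *: 1) - h t)) =
     (fun s : R => s^-1 *: ((f \o shift (q + t *: d)) (s *: d) - f (q + t *: d))).
    apply/funext => s /=; rewrite /h -[s%:A]/(s * 1).
    have -> : q + (s * 1 + t) *: d = s *: d + (q + t *: d) by apply/rowP => i; rewrite !mxE; ring.
    by [].
  split; first by rewrite /derivable key; exact: diff_derivable (Hd _ Ut).
  by rewrite /derive key.
have Ul : forall t : R, t \in `[0, 1]%R -> U (q + t *: d).
  by move=> t; rewrite in_itv /= => /andP[? ?]; apply: HU; apply/andP.
have Hder : forall t : R, t \in `]0, 1[%R -> is_derive t 1 h ('D_d f (q + t *: d)).
  move=> t tin; apply: Hh; apply: Ul.
  by move: tin; rewrite !in_itv /= => /andP[/ltW -> /ltW ->].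
have Hcont : {within `[0, 1], continuous h}.
  apply: continuous_in_subspaceT => t tin.
  apply: differentiable_continuous; apply/derivable1_diffP.
  have tin' : t \in `[0, 1]%R by move: tin; rewrite inE.
  by have := Hh t (Ul t tin'); case.
have [c c01 Hc] := MVT ltr01 Hder Hcont.
have Uc : U (q + c *: d).
  by apply: Ul; move: c01; rewrite !in_itv /= => /andP[/ltW -> /ltW ->].
exists (q + c *: d) => //.
move: Hc; rewrite /h scale0r addr0 scale1r /d [q + _]addrC subrK subr0 mulr1 => ->.
have Dxi := Hd _ Uc; move: Dxi; rewrite /d.
set xi := q + c *: (p - q) => Dxi.
rewrite deriveE //.
rewrite {1}(row_sum_delta (p - q)) linear_sum; apply: eq_bigr => j _.
by rewrite linearZ /partial deriveE.
Qed.

Lemma cube_seg (R : realType) k (a : R) (p q : 'rV[R]_k) (t : R) :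
  cube a p -> cube a q -> 0 <= t <= 1 -> cube a (q + t *: (p - q)).
Proof.
move=> hp hq /andP[t0 t1] j; have /andP[p1 p2] := hp j; have /andP[q1 q2] := hq j.
rewrite !mxE; apply/andP; split.
  have [->|tp] := eqVneq t 0; first by rewrite mul0r addr0.
  have tp' : 0 < t by rewrite lt_def tp t0.
  nra.
have [->|tp] := eqVneq t 0; first by rewrite mul0r addr0.
have tp' : 0 < t by rewrite lt_def tp t0.
nra.
Qed.

Lemma cs_step (R : realFieldType) (m S Q a : R) : 0 <= m -> 0 <= Q -> S ^+ 2 <= m * Q ->
  (S + a) ^+ 2 <= (m + 1) * (Q + a ^+ 2).
Proof.
move=> m0 Q0 H.
have [me|mp] := eqVneq m 0.
  subst m; rewrite mul0r in H; nra.
have mp' : 0 < m by rewrite lt_def mp m0.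
have h1 : 0 <= (S - m * a) ^+ 2 by apply: sqr_ge0.
have h2 : m * (2 * S * a) <= m * (Q + m * a ^+ 2) by nra.
have h3 : 2 * S * a <= Q + m * a ^+ 2 by rewrite -(ler_pM2l mp').
nra.
Qed.

Lemma cs_sum (R : realFieldType) (m : nat) (a : 'I_m -> R) :
  (\sum_(i < m) a i) ^+ 2 <= m%:R * \sum_(i < m) a i ^+ 2.
Proof.
elim: m a => [|m IH] a; first by rewrite !big_ord0 mul0r expr0n.
rewrite !big_ord_recr /= -natr1; apply: cs_step => //.
by apply: sumr_ge0 => i _; apply: sqr_ge0.
Qed.

Lemma final_ineq (R : realFieldType) (s C1 C2 x0 A T Q : R) :
  1 < s -> 1 < C1 -> 1 < C2 -> 0 <= Q -> C2 * s * x0 ^+ 2 <= A ^+ 2 ->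
  T ^+ 2 <= (C1 - 1) * (C2 - 1) * s * Q ->
  s * (x0 ^+ 2 + Q) <= C1 * s * Q + (A + T) ^+ 2.
Proof.
move=> s1 c1 c2 Q0 HA HT.
have h0 : 0 <= ((C2 - 1) * A + C2 * T) ^+ 2 by apply: sqr_ge0.
have h1 : (C2 - 1) * A ^+ 2 - C2 * T ^+ 2 <= C2 * (C2 - 1) * (A + T) ^+ 2 by nra.
have h2 : (C2 - 1) * (C2 * s * x0 ^+ 2) <= (C2 - 1) * A ^+ 2 by rewrite ler_pM2l ?subr_gt0.
have h3 : C2 * T ^+ 2 <= C2 * ((C1 - 1) * (C2 - 1) * s * Q) by rewrite ler_pM2l ?(lt_trans ltr01).
have pos : 0 < C2 * (C2 - 1) by rewrite mulr_gt0 ?subr_gt0 ?(lt_trans ltr01).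
rewrite -(ler_pM2l pos); nra.
Qed.

Theorem proposition3p1 (R : realType) (k : nat) (L b sigma C1 C2 g : R)
  (Phi0 : 'rV[R]_k -> R) :
  (2 <= k)%N -> 0 < L -> 0 < b -> 1 < sigma -> 1 < C1 -> 1 < C2 ->
  C2_on (cube (L + b)) Phi0 ->
  (forall x, cube (L + b) x -> forall j : 'I_k, val j = 0%N ->
     C1 ^+ (k - 1) * C2 * sigma ^+ k <= (partial j Phi0 x) ^+ 2) ->
  (forall x, cube (L + b) x -> forall j : 'I_k, (0 < val j)%N ->
     (partial j Phi0 x) ^+ 2 <= (C1 - 1) * (C2 - 1) / (k - 1)%:R * sigma) ->
  0 < g -> g ^- 2 = C1 * sigma ->
  forall u u' : 'rV[R]_k, Omega g L b u -> Omega g L b u' ->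
    sigma * sqnorm (u - u') <= sqnorm (Smap g Phi0 u - Smap g Phi0 u').
Proof.
move: Phi0; case: k => [|[|n]] Phi0 //.
move=> _ L0 b0 s1 C11 C21 HC2 H0 Hj g0 hg u u' Hu Hu'.
set p := Gamma g u; set q := Gamma g u'.
have [xi Uxi Hmvt] := @mvt_line R _ (cube (L + b)) Phi0 p q
  (fun t ht => @cube_seg _ _ _ p q t Hu Hu' ht) (fun x Ux => (HC2 x Ux).1).
set P := fun j => partial j Phi0 xi.
set x0 := u 0 ord0 - u' 0 ord0.
set D := fun i : 'I_n.+1 => u 0 (lift ord0 i) - u' 0 (lift ord0 i).
have EL : sqnorm (u - u') = x0 ^+ 2 + \sum_(i < n.+1) D i ^+ 2.
  rewrite /sqnorm big_ord_recl !mxE; congr (_ + _); apply: eq_bigr => i _.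
  by rewrite !mxE.
have Ephi : Phi0 p - Phi0 q =
    P ord0 * x0 + \sum_(i < n.+1) g ^- i.+1 * D i * P (lift ord0 i).
  rewrite Hmvt big_ord_recl; congr (_ + _).
    by rewrite !mxE /= expr0 invr1 !mul1r mulrC.
  apply: eq_bigr => i _; rewrite !mxE lift0 /P /D; ring.
have ER : sqnorm (Smap g Phi0 u - Smap g Phi0 u') =
    \sum_(i < n.+1) (D i / g) ^+ 2 + (g ^+ n.+1 * (Phi0 p - Phi0 q)) ^+ 2.
  rewrite /sqnorm big_ord_recr /=; congr (_ + _).
    apply: eq_bigr => i _; rewrite !mxE /=.
    have hi : (i.+1 < n.+2)%N by exact: ltn_ord i.
    rewrite hi.
    rewrite (_ : insubd _ _ = lift ord0 i); last first.
      by apply: val_inj; rewrite /= insubdK...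
    by rewrite /D mulrBl.
  have hn : (n.+2 < n.+2)%N = false by rewrite ltnn.
  by rewrite !mxE /= hn subn1 /= -mulrBr.
rewrite EL ER Ephi.
set A := g ^+ n.+1 * P ord0 * x0.
set c := fun i : 'I_n.+1 => g ^+ n.+1 * g ^- i.+1 * P (lift ord0 i).
set T := \sum_(i < n.+1) c i * D i.
set Q := \sum_(i < n.+1) D i ^+ 2.
have ET : g ^+ n.+1 * (P ord0 * x0 + \sum_(i < n.+1) g ^- i.+1 * D i * P (lift ord0 i))
    = A + T.
  rewrite mulrDr mulr_sumr /A mulrA; congr (_ + _); apply: eq_bigr => i _.
  rewrite /c; ring.
have EQ : \sum_(i < n.+1) (D i / g) ^+ 2 = C1 * sigma * Q.
  rewrite /Q mulr_sumr; apply: eq_bigr => i _.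
  by rewrite expr_div_n hg mulrC.
rewrite ET EQ.
have gn0 : g != 0 by rewrite gt_eqF.
have K0 : g ^+ 2 * (C1 * sigma) = 1 by rewrite -hg mulfV // expf_neq0.
have g1 : g <= 1.
  have : 1 < C1 * sigma by rewrite (lt_le_trans C11) // ler_peMr ?ltW // (lt_trans ltr01).
  nra.
have Q0 : 0 <= Q by apply: sumr_ge0 => i _; apply: sqr_ge0.
apply: (@final_ineq _ sigma C1 C2 x0 A T Q) => //.
-
  have HP := H0 xi Uxi ord0 erefl.
  rewrite subn1 /= -/(P ord0) in HP.
  have K : (g ^+ n.+1) ^+ 2 * (C1 ^+ n.+1 * sigma ^+ n.+1) = 1.
    by rewrite -exprM mulnC exprM -exprMn -exprMn K0 expr1n.
  have -> : A ^+ 2 = (g ^+ n.+1) ^+ 2 * P ord0 ^+ 2 * x0 ^+ 2 by rewrite /A !exprMn.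
  have -> : C2 * sigma * x0 ^+ 2 =
     (g ^+ n.+1) ^+ 2 * (C1 ^+ n.+1 * C2 * sigma ^+ n.+2) * x0 ^+ 2.
    by rewrite -[LHS]mul1r -K [sigma ^+ n.+2]exprS; ring.
  apply: ler_wpM2r; first exact: sqr_ge0.
  by apply: ler_wpM2l; first exact: sqr_ge0.
-
  set M := (C1 - 1) * (C2 - 1) / n.+1%:R * sigma.
  have Hc : forall i, c i ^+ 2 <= M.
    move=> i; have hpos : (0 < lift ord0 i)%N by rewrite lift0.
    have HP := Hj xi Uxi (lift ord0 i) hpos.
    rewrite subn1 /= in HP.
    have Ee : g ^+ n.+1 * g ^- i.+1 = g ^+ (n - i).
      have hi : (i <= n)%N by rewrite -ltnS.
      rewrite (_ : g ^+ n.+1 = g ^+ i.+1 * g ^+ (n - i)); last by rewrite -exprD addSn subnKC.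
      by rewrite mulrAC mulfV ?expf_neq0 // mul1r.
    rewrite /c Ee exprMn (le_trans _ HP) //.
    apply: ler_piMl; first exact: sqr_ge0.
    apply: exprn_ile1; first exact: exprn_ge0 (ltW g0).
    exact: exprn_ile1 (ltW g0) g1.
  have CS := @cs_sum R n.+1 (fun i => c i * D i).
  apply: (le_trans CS).
  apply: (@le_trans _ _ (n.+1%:R * (M * Q))).
    apply: ler_wpM2l => //; rewrite /Q mulr_sumr; apply: ler_sum => i _.
    by rewrite exprMn; apply: ler_wpM2r; [exact: sqr_ge0 | exact: Hc].
  rewrite /M le_eqVlt; apply/orP; left; apply/eqP; field.
  by rewrite addrC natr1 pnatr_eq0.
Qed.
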